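(* Let $q$ be a power of an odd prime, $c\in\mathbb{F}_q^*$, and $f(X)=c(X^{q+1}-X^2)$ on $\mathbb{F}_{q^2}$. The functional graph of $f$ has exactly $\frac{q-1}{2}$ cycles of length two.
   Context: The functional graph of $f$ is the directed graph on $\mathbb{F}_{q^2}$ with edges $x\to f(x)$. *)

(* Defs.v *)
From HB Require Import structures.
From mathcomp Require Import all_boot all_order all_algebra all_field.
Set Implicit Arguments. Unset Strict Implicit. Unset Printing Implicit Defensive.
Import GRing.Theory.
Local Open Scope ring_scope.

Definition two_cycles (T : finType) (f : T -> T) : {set {set T}} :=
  [set [set x; f x] | x in [pred x | (f (f x) == x) && (f x != x)]].

Definition fmap (F : finFieldType) (q : nat) (c : F) (x : F) : F :=
  c * (x ^+ q.+1 - x ^+ 2).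

(* Main.v *)
Require Import Defs.
From HB Require Import structures.
From mathcomp Require Import all_boot all_order all_algebra all_field.
From mathcomp Require Import ring zify.
Import GRing.Theory.
Local Open Scope ring_scope.

Section Aux.
Variables (F : finFieldType) (p k : nat).
Hypotheses (pp : prime p) (op : odd p) (kp : (0 < k)%N)
  (cardF : #|F| = ((p ^ k) ^ 2)%N).
Local Notation q := (p ^ k)%N.

Lemma charF : p \in [pchar F].
Proof. by apply: (@card_finPcharP _ _ (k*2)%N) => //; rewrite cardF expnM. Qed.

Lemma two_neq0 : (2%:R : F) != 0.
Proof.
apply/negP; rewrite -(dvdn_pcharf charF) => /(@dvdn_leq _ 2 isT) le2.
have /eqP e : p == 2%N by rewrite eqn_leq le2 prime_gt1.
by move: op; rewrite e.
Qed.

Lemma q_gt1 : (1 < q)%N.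
Proof. by rewrite -(expn0 p) ltn_exp2l // prime_gt1. Qed.

Lemma qnat : [pchar F].-nat q.
Proof.
by rewrite (eq_pnat _ (pcharf_eq charF)) pnatX pnat_id.
Qed.

Lemma fD (x y : F) : (x + y) ^+ q = x ^+ q + y ^+ q.
Proof. exact: exprDn_pchar qnat. Qed.
Lemma fN (x : F) : (- x) ^+ q = - x ^+ q.
Proof. exact: exprNn_pchar qnat. Qed.
Lemma fB (x y : F) : (x - y) ^+ q = x ^+ q - y ^+ q.
Proof. by rewrite fD fN. Qed.
Lemma ff (x : F) : (x ^+ q) ^+ q = x.
Proof. by rewrite -exprM mulnn -cardF expf_card. Qed.
Lemma f2 : (2%:R : F) ^+ q = 2%:R.
Proof. by rewrite mulr2n fD expr1n. Qed.


Lemma ffx (c x : F) : c ^+ q = c ->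
  fmap q c (fmap q c x) = - c ^+ 3 * x * (x ^+ q - x) ^+ 2 * (x ^+ q + x).
Proof.
move=> hc; rewrite /fmap.
set y := (c * (x ^+ q.+1 - x ^+ 2)).
have hy : y ^+ q = c * (x ^+ q * x - (x ^+ q) ^+ 2).
  by rewrite /y exprMn hc fB [x ^+ q.+1]exprS exprMn ff exprAC.
rewrite [y ^+ q.+1]exprS hy /y [x ^+ q.+1]exprS; ring.
Qed.

Lemma fx (c x : F) : fmap q c x = c * x * (x ^+ q - x).
Proof. by rewrite /fmap exprS; ring. Qed.


Lemma S_char (c x : F) : c ^+ q = c -> c != 0 ->
  ((fmap q c (fmap q c x) == x) && (fmap q c x != x)) =
  (c ^+ 3 * (x ^+ q - x) ^+ 2 * (x ^+ q + x) == -1).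
Proof.
move=> hc c0; rewrite ffx // fx.
have sx : (x ^+ q) ^+ q = x by rewrite ff.
move: sx; set s := x ^+ q => sx.
have qg0 : (0 < q)%N by rewrite ltnW // q_gt1.
apply/andP/eqP.
- case=> /eqP h1 h2.
  have x0 : x != 0.
    apply: contraNneq h2 => x0.
    by rewrite /s x0 expr0n /= (negbTE (lt0n_neq0 qg0)) !(mulr0, mul0r).
  apply: (mulfI x0); rewrite mulrN1 -[in RHS]h1; ring.
- move=> h.
  have x0 : x != 0.
    apply: contra_eq_neq h => x0.
    rewrite /s x0 expr0n /= (negbTE (lt0n_neq0 qg0)) !(mulr0, mul0r, subr0, addr0).
    by rewrite eq_sym oppr_eq0 oner_eq0.
  split.
    apply/eqP; rewrite (_ : _ * _ = - x * (c ^+ 3 * (s - x) ^+ 2 * (s + x))); last by ring.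
    by rewrite h; ring.
  apply/eqP => e.
  have e1 : c * (s - x) = 1.
    by apply: (mulfI x0); rewrite mulr1 -[in RHS]e; ring.
  have e2 : c * (x - s) = 1.
    by rewrite -[c]hc -sx -fB -exprMn e1 expr1n.
  move/eqP: two_neq0; apply.
  by rewrite (_ : 2%:R = c * (s - x) + c * (x - s)); [ring | by rewrite e1 e2 mulr2n].
Qed.


Lemma card_roots_lt (P : {poly F}) (A : {set F}) : P != 0 ->
  (forall u, u \in A -> root P u) -> (#|A| < size P)%N.
Proof.
move=> P0 h; rewrite cardE; apply: max_poly_roots P0 _ (enum_uniq _).
by apply/allP => u; rewrite mem_enum; exact: h.
Qed.

Lemma cardU : #|[set u : F | u ^+ q == - u]| = q.
Proof.
set U := [set u : F | _].
set K := [set u : F | u ^+ q == u].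
have q1 := q_gt1.
have szP : size ('X^q + 'X : {poly F}) = q.+1.
  by rewrite size_polyDl ?size_polyXn // size_polyX ltnS.
have szQ : size ('X^q - 'X : {poly F}) = q.+1.
  by rewrite size_polyDl ?size_polyXn // size_polyN size_polyX ltnS.
have hU : (#|U| < q.+1)%N.
  rewrite -szP; apply: card_roots_lt.
    by rewrite -size_poly_eq0 szP.
  move=> u; rewrite inE => /eqP h.
  by rewrite rootE !hornerE h addNr.
have hK : (#|K| < q.+1)%N.
  rewrite -szQ; apply: card_roots_lt.
    by rewrite -size_poly_eq0 szQ.
  move=> u; rewrite inE => /eqP h.
  by rewrite rootE !hornerE h subrr.
pose phi (x : F) := x ^+ q - x.
pose pre (u : F) := odflt 0 [pick y | phi y == u].
pose psi (x : F) := (phi x, x - pre (phi x)).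
have inj : injective psi.
  move=> x y [e1 e2]; move: e2; rewrite e1 => /addIr //.
have hF : (q * q <= #|U| * #|K|)%N.
  rewrite mulnn -cardF -cardsT -(card_imset _ inj) -cardsX.
  apply: subset_leq_card; apply/subsetP => _ /imsetP[x _ ->].
  rewrite !inE /= /phi; apply/andP; split.
    by rewrite fB ff opprB.
  rewrite /pre; case: pickP => [y /eqP hy | h]; last first.
    by have := h x; rewrite eqxx.
  rewrite /= fB; apply/eqP.
  have -> : x ^+ q - y ^+ q = (x - y) + ((x ^+ q - x) - (y ^+ q - y)) by ring.
  by rewrite -/(phi y) hy subrr addr0.
rewrite ltnS in hU; rewrite ltnS in hK.
nia.
Qed.


Lemma cardE (c : F) : c ^+ q = c -> c != 0 ->
  #|[set x : F | c ^+ 3 * (x ^+ q - x) ^+ 2 * (x ^+ q + x) == -1]| = (q - 1)%N.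
Proof.
move=> hc c0.
set U := [set u : F | u ^+ q == - u].
have t0 := two_neq0.
pose a (u : F) := - (c ^+ 3 * u ^+ 2)^-1.
pose h (u : F) := (a u - u) / 2%:R.
have hs : forall u, u \in U -> (h u) ^+ q = (a u + u) / 2%:R.
  move=> u; rewrite inE => /eqP hu.
  rewrite /h /a exprMn exprVn f2 fB fN exprVn exprMn -exprAC hc -exprAC hu sqrrN.
  by rewrite opprK.
have ha : forall u, u != 0 -> c ^+ 3 * u ^+ 2 * a u = -1.
  move=> u u0; rewrite /a mulrN mulfV // mulf_neq0 // expf_neq0 //.
have phih : forall u, u \in U -> (h u) ^+ q - h u = u.
  move=> u uU; rewrite hs // /h; field.
  by [].
set E := [set x : F | _].
have -> : E = h @: (U :\ 0).
  apply/setP => x; apply/idP/idP.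
    rewrite inE => /eqP hx.
    have u0 : x ^+ q - x != 0.
      apply: contra_eq_neq hx => ->.
      by rewrite expr0n /= mulr0 mul0r eq_sym oppr_eq0 oner_eq0.
    apply/imsetP; exists (x ^+ q - x).
      by rewrite !inE u0 /= fB ff opprB.
    have e : x ^+ q + x = a (x ^+ q - x).
      have nz : c ^+ 3 * (x ^+ q - x) ^+ 2 != 0 by rewrite mulf_neq0 // expf_neq0.
      by apply: (mulfI nz); rewrite hx /a mulrN mulfV.
    rewrite /h -e; field.
    by [].
  case/imsetP => u; rewrite !inE => /andP[u0 uU] ->.
  have uU' : u \in U by rewrite inE.
  have hsum : (h u) ^+ q + h u = a u by rewrite hs // /h; field.
  by rewrite phih // hsum ha.
rewrite card_in_imset; last first.
  move=> u v; rewrite !inE => /andP[_ uU] /andP[_ vU] e.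
  have uU' : u \in U by rewrite inE.
  have vU' : v \in U by rewrite inE.
  by rewrite -(phih u uU') -(phih v vU') e.
have := cardsD1 0 U; rewrite cardU.
have -> : (0 : F) \in U by rewrite inE expr0n eqn0Ngt (ltnW q_gt1) oppr0.
move=> ->; by rewrite add1n subn1.
Qed.

End Aux.

Lemma card_two (T : finType) (f : T -> T) :
  #|[set x | (f (f x) == x) && (f x != x)]| = (#|two_cycles f| * 2)%N.
Proof.
set D := [set x | _].
set P := two_cycles f.
have kf : forall x z, x \in D -> z \in [set x; f x] ->
    z \in D /\ [set z; f z] = [set x; f x].
  move=> x z; rewrite !inE => /andP[/eqP h1 h2] /orP[] /eqP ->.
    by rewrite h1 h2 eqxx.
  split; first by rewrite h1 eqxx eq_sym h2.
  by rewrite h1 setUC.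
have PE : forall B, B \in P -> exists2 x, x \in D & B = [set x; f x].
  by move=> B /imsetP[x xD ->]; exists x; rewrite // inE.
have partP : partition P D.
  apply/and3P; split.
  - apply/eqP/setP => z; apply/bigcupP/idP.
      by case=> B /PE[x xD ->] /(kf _ _ xD) [].
    move=> zD; exists [set z; f z]; last by rewrite !inE eqxx.
    by apply/imsetP; exists z => //; move: zD; rewrite inE.
  - apply/trivIsetP => A B /PE[x xD ->] /PE[y yD ->] neq.
    apply/pred0P => z /=; apply/negP => /andP[zx zy].
    have [_ e1] := kf _ _ xD zx; have [_ e2] := kf _ _ yD zy.
    by move: neq; rewrite -e1 -e2 eqxx.
  - apply/negP => /PE[x _] /setP /(_ x); rewrite !inE eqxx.
    by [].
rewrite (card_partition partP).
rewrite (eq_bigr (fun _ => 2%N)) ?sum_nat_const //.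
move=> B /PE[x xD ->]; rewrite cards2 eq_sym.
by move: xD; rewrite inE => /andP[_ ->].
Qed.

Theorem corollary10 (F : finFieldType) (p k : nat) (c : F) :
  prime p -> odd p -> (0 < k)%N ->
  #|F| = ((p ^ k) ^ 2)%N ->
  c ^+ (p ^ k) = c -> c != 0 ->
  #|two_cycles (fmap (p ^ k) c)| = ((p ^ k - 1) %/ 2)%N.
Proof.
move=> pp op kp cardF hc c0.
have h := @card_two F (fmap (p ^ k) c).
have eD : [set x | (fmap (p ^ k) c (fmap (p ^ k) c x) == x) && (fmap (p ^ k) c x != x)]
   = [set x : F | c ^+ 3 * (x ^+ (p ^ k) - x) ^+ 2 * (x ^+ (p ^ k) + x) == -1].
  by apply/setP => x; rewrite !inE; apply: S_char.
have hE : #|[set x : F | c ^+ 3 * (x ^+ (p ^ k) - x) ^+ 2 * (x ^+ (p ^ k) + x) == -1]|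
   = (p ^ k - 1)%N by apply: cardE.
by rewrite -hE -eD h mulnK.
Qed.
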